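(* Let $n \ge k \ge 2$ be integers, let $B^n$ be the open unit ball in $\mathbb{R}^n$, and fix $y \in B^n$. Define the vector field $W$ on $B^n \setminus \{y\}$ as follows, writing $Q(x) = \frac{1-2\langle x,y\rangle + |y|^2}{|x-y|^2}$ (note $Q(x) \geq 1$ on $B^n\setminus\{y\}$). For $k>2$, \[ W(x) = -\frac{1}{k}\big(Q(x)^{\frac{k}{2}} - 1\big)(x-y) + \frac{1}{k-2}\big(Q(x)^{\frac{k-2}{2}} - 1\big)\, y, \] and for $k=2$, \[ W(x) = -\frac{1}{2}\big(Q(x) - 1\big)(x-y) + \frac{1}{2}\log\big(Q(x)\big)\, y. \] Then for every point $x \in B^n \setminus \{y\}$ and every orthonormal $k$-frame $\{e_1,\dots,e_k\} \subset \mathbb{R}^n$, \[ \sum_{i=1}^k \langle D_{e_i} W, e_i\rangle \leq 1, \] where $D$ denotes the standard directional derivative in $\mathbb{R}^n$. *)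

(* Defs.v *)
From HB Require Import structures.
From mathcomp Require Import all_boot all_order all_algebra.
From mathcomp Require Import all_classical all_reals all_analysis.
Set Implicit Arguments. Unset Strict Implicit. Unset Printing Implicit Defensive.
Import Order.TTheory GRing.Theory Num.Theory.
Import numFieldNormedType.Exports.
Local Open Scope ring_scope.

Definition dotv {R : realType} {n : nat} (u v : 'rV[R]_n) : R :=
  \sum_(j < n) u 0 j * v 0 j.

Definition Qfun {R : realType} {n : nat} (y x : 'rV[R]_n) : R :=
  (1 - 2 * dotv x y + dotv y y) / dotv (x - y) (x - y).

Definition Wfield {R : realType} {n : nat} (k : nat) (y x : 'rV[R]_n)
  : 'rV[R]_n :=
  if (2 < k)%N then
    (- (k%:R)^-1 * (powR (Qfun y x) (k%:R / 2) - 1)) *: (x - y)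
    + ((k%:R - 2)^-1 * (powR (Qfun y x) ((k%:R - 2) / 2) - 1)) *: y
  else
    (- 2^-1 * (Qfun y x - 1)) *: (x - y) + (2^-1 * ln (Qfun y x)) *: y.

(* Main.v *)
Require Import Defs.
From HB Require Import structures.
From mathcomp Require Import all_boot all_order all_algebra.
From mathcomp Require Import all_classical all_reals all_analysis.
Import Order.TTheory GRing.Theory Num.Theory.
Import numFieldNormedType.Exports.
Local Open Scope ring_scope.
Local Open Scope classical_set_scope.
From mathcomp Require Import ring lra.

Section Dot.
Context {R : realType} {n : nat}.
Implicit Types u v w : 'rV[R]_n.

Lemma dotvC u v : dotv u v = dotv v u.
Proof. by apply: eq_bigr => j _; rewrite mulrC. Qed.

Lemma dotvDl u v w : dotv (u + v) w = dotv u w + dotv v w.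
Proof. by rewrite /dotv -big_split; apply: eq_bigr => j _; rewrite mxE mulrDl. Qed.

Lemma dotvZl (a : R) u w : dotv (a *: u) w = a * dotv u w.
Proof. by rewrite /dotv mulr_sumr; apply: eq_bigr => j _; rewrite mxE mulrA. Qed.

Lemma dotvNl u w : dotv (- u) w = - dotv u w.
Proof. by rewrite -scaleN1r dotvZl mulN1r. Qed.

Lemma dotvBl u v w : dotv (u - v) w = dotv u w - dotv v w.
Proof. by rewrite dotvDl dotvNl. Qed.

Lemma dotvDr u v w : dotv w (u + v) = dotv w u + dotv w v.
Proof. by rewrite dotvC dotvDl !(dotvC w). Qed.

Lemma dotvZr (a : R) u w : dotv w (a *: u) = a * dotv w u.
Proof. by rewrite dotvC dotvZl dotvC. Qed.

Lemma dotvBr u v w : dotv w (u - v) = dotv w u - dotv w v.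
Proof. by rewrite dotvC dotvBl !(dotvC w). Qed.

Lemma dotv_suml (k : nat) (F : 'I_k -> 'rV[R]_n) w :
  dotv (\sum_(i < k) F i) w = \sum_(i < k) dotv (F i) w.
Proof.
rewrite /dotv exchange_big; apply: eq_bigr => j _.
by rewrite summxE mulr_suml.
Qed.

Lemma dotv_ge0 u : 0 <= dotv u u.
Proof. by apply: sumr_ge0 => j _; rewrite -expr2 sqr_ge0. Qed.

Lemma dotv_gt0 u : u != 0 -> 0 < dotv u u.
Proof.
move=> u0; rewrite lt_def dotv_ge0 andbT; apply: contra u0 => /eqP H.
have H2 := (psumr_eq0P (fun j _ => (@sqr_ge0 _ (u 0 j))) ).
apply/eqP/matrixP => i j; rewrite ord1 mxE.
have : u 0 j ^+ 2 = 0.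
  apply: (H2 xpredT _ j isT); rewrite -[RHS]H /dotv.
  by apply: eq_bigr => l _; rewrite expr2.
by move/eqP; rewrite expf_eq0 => /andP[_ /eqP].
Qed.

End Dot.
Section S.
Context {R : realType} {W : normedModType R}.

Lemma is_deriveZf (f : R -> R) (g : R -> W) (t df : R) (dg : W) :
  is_derive t 1 f df -> is_derive t 1 g dg ->
  is_derive t 1 (fun s => f s *: g s) (f t *: dg + df *: g t).
Proof.
move=> [exf vf] [exg vg].
have Lf : (fun h => h^-1 *: ((f \o shift t) (h *: 1) - f t)) @ 0^' --> df.
  by rewrite -vf; exact: exf.
have Lg : (fun h => h^-1 *: ((g \o shift t) (h *: 1) - g t)) @ 0^' --> dg.
  by rewrite -vg; exact: exg.
have ct : f @ t --> f t.
  exact/differentiable_continuous/derivable1_diffP.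
have Cf : (fun h => f (h *: 1 + t)) @ 0^' --> f t.
  apply: (cvg_comp (fun h => h *: 1 + t) f _ ct).
  have E : (fun h : R => h *: 1 + t) = (fun h => h + t).
    by apply/funext => h; rewrite /GRing.scale /= mulr1.
  rewrite E; apply: cvg_within_filter.
  have H := cvgD (@cvg_id _ (nbhs (0:R))) (cvg_cst t); rewrite add0r in H.
  exact: H.
have L : (fun h => h^-1 *: (((fun s => f s *: g s) \o shift t) (h *: 1) - (f t *: g t))) @ 0^' --> (f t *: dg + df *: g t).
  have E : (fun h => h^-1 *: (((fun s => f s *: g s) \o shift t) (h *: 1) - (f t *: g t))) =
    (fun h => f (h *: 1 + t) *: (h^-1 *: ((g \o shift t) (h *: 1) - g t)) + (h^-1 *: ((f \o shift t) (h *: 1) - f t)) *: g t).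
    apply/funext => h /=.
    rewrite /shift /=.
    rewrite !scalerBr !scalerA scalerBl.
    rewrite [h^-1 * f _]mulrC addrA.
    have e1 : h^-1 *: f (h%:A + t) = f (h%:A+t) / h by rewrite mulrC.
    have e2 : h^-1 *: f t = f t / h by rewrite mulrC.
    by rewrite e1 e2 [h^-1 * f t]mulrC subrK.
  rewrite E; apply: cvgD; apply: cvgZ => //; exact: cvg_cst.
split; first by apply/cvg_ex; eexists; exact: L.
exact: cvg_lim L.
Qed.
End S.
Arguments is_deriveZf {R W f g t df dg}.
Section Bessel.
Context {R : realType} {n : nat}.
Lemma bessel k (e : 'I_k -> 'rV[R]_n)
  (he : forall i j, dotv (e i) (e j) = (i == j)%:R) d :
  \sum_(i < k) (dotv d (e i)) ^+ 2 <= dotv d d.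
Proof.
set c := fun i => dotv d (e i).
set p := \sum_(i < k) c i *: e i.
have hpi i : dotv p (e i) = c i.
  rewrite dotv_suml (bigD1 i) //= dotvZl he eqxx mulr1 big1 ?addr0 //.
  by move=> j /negbTE ji; rewrite dotvZl he ji mulr0.
have hp1 : dotv p d = \sum_(i < k) c i ^+ 2.
  by rewrite dotv_suml; apply: eq_bigr => i _; rewrite dotvZl dotvC expr2.
have hp2 : dotv p p = \sum_(i < k) c i ^+ 2.
  by rewrite {2}/p dotvC dotv_suml; apply: eq_bigr => i _; rewrite dotvZl dotvC hpi expr2.
have := dotv_ge0 (d - p).
rewrite dotvBl !dotvBr (dotvC d p) hp1 hp2.
rewrite /c => H. lra.
Qed.
End Bessel.
Section Der.
Context {R : realType} {n : nat}.

Lemma D_dir (F : 'rV[R]_n -> 'rV[R]_n) (x v : 'rV[R]_n) :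
  'D_v F x = 'D_1 (fun t : R => F (t *: v + x)) 0.
Proof.
rewrite /derive; f_equal; f_equal; apply/funext => h /=.
by rewrite /shift /= addr0 scale0r add0r [_%:A]mulr1.
Qed.

Lemma is_derive_quad (a b c : R) :
  is_derive (0:R) 1 (fun t : R => a + b * t + c * t ^+ 2) b.
Proof.
have -> : (fun t : R => a + b * t + c * t ^+ 2) = horner (a%:P + b *: 'X + c *: 'X^2).
  by apply/funext => t; rewrite !hornerE.
have H := @is_derive_poly R (a%:P + b *: 'X + c *: 'X^2) 0.
by apply: (is_derive_eq H); rewrite !poly.derivE !hornerE /= mulr0 mul0r addr0.
Qed.
End Der.
Section Der2.
Context {R : realType} {n : nat}.
Lemma is_derive_q (x y e : 'rV[R]_n) (hee : dotv e e = 1)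
  (hr : 0 < dotv (x - y) (x - y)) :
  is_derive (0:R) 1 (fun t : R => Qfun y (t *: e + x))
    (- (2 / dotv (x - y) (x - y)) * (Qfun y x * dotv (x - y) e + dotv y e)).
Proof.
set r2 := dotv (x - y) (x - y); set A := dotv y e; set B := dotv (x - y) e.
set n0 := 1 - 2 * dotv x y + dotv y y.
have hN t : 1 - 2 * dotv (t *: e + x) y + dotv y y = n0 + (-2 * A) * t + 0 * t ^+ 2.
  rewrite dotvDl dotvZl (dotvC e y) /n0 -/A; ring.
have hD t : dotv (t *: e + x - y) (t *: e + x - y) = r2 + (2 * B) * t + 1 * t ^+ 2.
  rewrite -addrA (dotvDl (t *: e) (x - y)) !(dotvDr (t *: e) (x - y)) !dotvZl !dotvZr.
  rewrite hee (dotvC e (x - y)) -/B -/r2; ring.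
have -> : (fun t : R => Qfun y (t *: e + x)) =
  (fun t : R => n0 + (-2 * A) * t + 0 * t ^+ 2) * (fun t => (r2 + (2 * B) * t + 1 * t ^+ 2)^-1).
  by apply/funext => t; rewrite /Qfun /= hN hD.
have r2n0 : r2 != 0 by rewrite gt_eqF.
have H1 := is_derive_quad n0 (-2 * A) 0.
have H2 := @is_deriveV R (fun t => r2 + (2 * B) * t + 1 * t ^+ 2) 0 (2 * B) 1.
have H3 := is_deriveM H1 (H2 _ (is_derive_quad r2 (2 * B) 1)).
have h0 : r2 + 2 * B * 0 + 1 * 0 ^+ 2 != 0 by rewrite mulr0 expr0n /= mulr0 !addr0.
apply: (is_derive_eq (H3 h0)).
rewrite /Qfun -/n0 -/r2 /=.
rewrite !mulr0 expr0n /= !mulr0 !addr0.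
rewrite /GRing.scale /=. by field.
Qed.
End Der2.

Section Der3.
Context {R : realType} {n : nat}.
Lemma aff_der (f : R -> R) (t0 df a : R) :
  is_derive t0 1 f df -> is_derive t0 1 (fun t => a * (f t - 1)) (a * df).
Proof.
move=> H.
have H2 := is_deriveZ a (is_deriveB H (is_derive_cst (1:R) t0 1)).
rewrite subr0 in H2.
exact: H2.
Qed.

Lemma mul_der (f : R -> R) (t0 df a : R) :
  is_derive t0 1 f df -> is_derive t0 1 (fun t => a * f t) (a * df).
Proof. move=> H; exact: (is_deriveZ a H). Qed.

Lemma lin_vec (v w : 'rV[R]_n) (t0 : R) : is_derive t0 1 (fun t : R => t *: v + w) v.
Proof.
have H := is_deriveZf (is_derive_id t0 1) (is_derive_cst v t0 1).
have H2 := is_deriveD H (is_derive_cst w t0 1).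
apply: (is_derive_eq H2).
by rewrite scaler0 add0r scale1r addr0.
Qed.
End Der3.
Section Dir.
Context {R : realType} {n : nat}.

Lemma powRB' (Q r s : R) : 0 < Q -> Q `^ (r - s) = Q `^ r / Q `^ s.
Proof. by move=> hQ; apply: powRB; rewrite (gt_eqF hQ) implybT. Qed.

Lemma dir_term (k : nat) (hk : (2 <= k)%N) (x y e : 'rV[R]_n) (hee : dotv e e = 1)
  (hr : 0 < dotv (x - y) (x - y)) (hQ : 0 < Qfun y x) :
  dotv ('D_e (Wfield k y) x) e =
  - ((if (2 < k)%N then Qfun y x `^ (k%:R / 2) else Qfun y x) - 1) / k%:R
  + (if (2 < k)%N then Qfun y x `^ (k%:R / 2) else Qfun y x) *
    (Qfun y x ^+ 2 * dotv (x - y) e ^+ 2 - dotv y e ^+ 2) /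
    (Qfun y x ^+ 2 * dotv (x - y) (x - y)).
Proof.
set Q := Qfun y x; set r2 := dotv (x - y) (x - y); set A := dotv y e.
set B := dotv (x - y) e.
rewrite D_dir.
set q := fun t : R => Qfun y (t *: e + x).
have Hq : is_derive (0:R) (1:R) q (-(2/r2) * (Q*B + A)) := is_derive_q x y e hee hr.
have q0 : q 0 = Q by rewrite /q scale0r add0r.
have hq0 : 0 < q 0 by rewrite q0.
have Hg := lin_vec e (x - y) 0.
have r2n0 : r2 != 0 by rewrite gt_eqF.
have Qn0 : Q != 0 by rewrite gt_eqF.
case: (ltnP 2 k) => hk2.
- set c1 := k%:R / 2 : R; set c2 := (k%:R - 2) / 2 : R.
  have Hp1 := is_derive1_comp (is_derive1_powR c1 hq0) Hq.
  have Hp2 := is_derive1_comp (is_derive1_powR c2 hq0) Hq.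
  have Ha := @aff_der _ _ _ _ (- (k%:R^-1)) Hp1.
  have Hb := @aff_der _ _ _ _ ((k%:R - 2)^-1) Hp2.
  have Hphi := is_deriveD (is_deriveZf Ha Hg) (is_deriveZf Hb (is_derive_cst y (0:R) (1:R))).
  rewrite (_ : (fun t : R => Wfield k y (t *: e + x)) =
     (fun t => (- (k%:R^-1) * (powR (q t) c1 - 1)) *: (t *: e + (x - y))
        + ((k%:R - 2)^-1 * (powR (q t) c2 - 1)) *: y)); last first.
    by apply/funext => t; rewrite /Wfield hk2 /q addrA.
  case: Hphi => _ ->.
  rewrite /= scaler0 add0r scale0r add0r !dotvDl !dotvZl hee -/A -/B q0.
  have e1 : Q `^ (c1 - 1) = Q `^ c1 / Q by rewrite powRB' // powRr1 // ltW.
  have e2 : Q `^ (c2 - 1) = Q `^ c1 / Q ^+ 2.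
    rewrite (_ : c2 - 1 = c1 - 2%:R); last by rewrite /c1 /c2; field.
    by rewrite powRB' // powR_mulrn // ltW.
  have hkR : (2:R) < k%:R by rewrite ltr_nat.
  have k0 : (k%:R : R) != 0 by rewrite gt_eqF // (lt_trans _ hkR).
  have k2 : (k%:R : R) - 2 != 0 by rewrite subr_eq0 gt_eqF.
  by rewrite e1 e2 /c1 /c2; field; rewrite r2n0 Qn0 k0 k2.
have ke : k = 2%N by apply/eqP; rewrite eqn_leq hk2 hk.
subst k.
have Hl := is_derive1_comp (is_derive1_ln hq0) Hq.
have Ha := @aff_der _ _ _ _ (- (2^-1)) Hq.
have Hb := @mul_der _ _ _ _ (2^-1) Hl.
have Hphi := is_deriveD (is_deriveZf Ha Hg) (is_deriveZf Hb (is_derive_cst y (0:R) (1:R))).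
rewrite (_ : (fun t : R => Wfield 2 y (t *: e + x)) =
   (fun t => (- (2^-1) * (q t - 1)) *: (t *: e + (x - y))
      + (2^-1 * ln (q t)) *: y)); last first.
  by apply/funext => t; rewrite /Wfield /= /q addrA.
case: Hphi => _ ->.
rewrite /= scaler0 add0r scale0r add0r !dotvDl !dotvZl hee -/A -/B q0.
by field; rewrite r2n0 Qn0.
Qed.
End Dir.
Local Close Scope classical_set_scope.
Theorem lemma2p1 (R : realType) (n k : nat) (hk : (2 <= k)%N) (hkn : (k <= n)%N)
  (y : 'rV[R]_n) (hy : dotv y y < 1)
  (x : 'rV[R]_n) (hx : dotv x x < 1) (hxy : x != y)
  (e : 'I_k -> 'rV[R]_n)
  (he : forall i j : 'I_k, dotv (e i) (e j) = (i == j)%:R) :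
  \sum_(i < k) dotv ('D_(e i) (Wfield k y) x) (e i) <= 1.
Proof.
have hr : 0 < dotv (x - y) (x - y) by apply: dotv_gt0; rewrite subr_eq0.
have hnum : 1 - 2 * dotv x y + dotv y y = dotv (x - y) (x - y) + (1 - dotv x x).
  rewrite dotvBl !dotvBr (dotvC y x); ring.
have hQ : 0 < Qfun y x.
  rewrite /Qfun hnum; apply: divr_gt0 => //.
  by apply: addr_gt0 => //; rewrite subr_gt0.
have hee i : dotv (e i) (e i) = 1 by rewrite he eqxx.
rewrite (eq_bigr _ (fun i _ => @dir_term R n k hk x y (e i) (hee i) hr hQ)).
set Q := Qfun y x; set r2 := dotv (x - y) (x - y).
set P := if (2 < k)%N then _ else _.
have P0 : 0 <= P by rewrite /P; case: ifP => _; [exact: powR_ge0 | exact: ltW].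
have r2n0 : r2 != 0 by rewrite gt_eqF.
have Qn0 : Q != 0 by rewrite gt_eqF.
have k0 : (k%:R : R) != 0 by rewrite pnatr_eq0 -lt0n (leq_trans _ hk).
apply: (@le_trans _ _ (\sum_(i < k) (- (P - 1) / k%:R + P * dotv (x - y) (e i) ^+ 2 / r2))).
  apply: ler_sum => i _.
  set A := dotv y (e i); set B := dotv (x - y) (e i).
  have -> : P * (Q ^+ 2 * B ^+ 2 - A ^+ 2) / (Q ^+ 2 * r2) =
    P * B ^+ 2 / r2 - P * A ^+ 2 / (Q ^+ 2 * r2) by field; rewrite r2n0 Qn0.
  have : 0 <= P * A ^+ 2 / (Q ^+ 2 * r2).
    by apply: divr_ge0; [apply: mulr_ge0 => //; exact: sqr_ge0 | apply: mulr_ge0; [exact: sqr_ge0 | exact: ltW]].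
  lra.
rewrite big_split /= sumr_const card_ord.
have -> : - (P - 1) / k%:R *+ k = - (P - 1) by rewrite -mulr_natr; field.
have -> : \sum_(i < k) P * dotv (x - y) (e i) ^+ 2 / r2 =
  P / r2 * \sum_(i < k) dotv (x - y) (e i) ^+ 2.
  by rewrite mulr_sumr; apply: eq_bigr => i _; field.
have hb := @bessel R n k e he (x - y).
have : P / r2 * \sum_(i < k) dotv (x - y) (e i) ^+ 2 <= P / r2 * r2.
  by apply: ler_wpM2l => //; apply: divr_ge0 => //; exact: ltW.
have -> : P / r2 * r2 = P by field.
lra.
Qed.
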